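(* Let $k$ be a field, $H$ a $k$-coalgebra, $X$ a global $H$-comodule regarded as a partial comodule datum $(X,X\otimes H,\mathrm{id}_{X\otimes H},\rho_X)$, and let $(Y,Y\bullet H,\pi_Y,\rho_Y)$ be a partial subcomodule of $X$. Then $Y$ is again global, i.e. $\pi_Y$ is an isomorphism.
   Context: A partial comodule datum over $H$ (in $k$-vector spaces) is a quadruple $(Y,Y\bullet H,\pi_Y,\rho_Y)$ with $\pi_Y:Y\otimes H\to Y\bullet H$ a surjective linear map and $\rho_Y:Y\to Y\bullet H$ linear. A morphism of partial comodule data $Y\to X$ is a pair $(f,f\bullet H)$ of linear maps $f:Y\to X$, $f\bullet H:Y\bullet H\to X\bullet H$ with $(f\bullet H)\rho_Y=\rho_Xf$ and $(f\bullet H)\pi_Y=\pi_X(f\otimes H)$. A partial subcomodule of $X$ is a partial comodule datum $Y$ together with a morphism $(f,f\bullet H):Y\to X$ such that both $f$ and $f\bullet H$ are injective. A partial comodule datum is called global when its map $\pi$ is an isomorphism. *)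

(* Defs.v *)
(* Tensor products of (arbitrary,
   possibly infinite-dimensional) vector spaces are not in the library,
   so they are specified by their universal property. *)
From HB Require Import structures.
From mathcomp Require Import all_boot all_order all_algebra.
From Stdlib Require Import ClassicalEpsilon.
Set Implicit Arguments. Unset Strict Implicit. Unset Printing Implicit Defensive.
Import GRing.Theory.
Local Open Scope ring_scope.

Section Tensor.
Variable k : fieldType.

Definition bilinear_map (U V W : lmodType k) (b : U -> V -> W) :=
  (forall (a : k) u u' v, b (a *: u + u') v = a *: b u v + b u' v) /\
  (forall (a : k) u v v', b u (a *: v + v') = a *: b u v + b u v').

Record tensor (U V : lmodType k) := Tensor {
  tcar :> lmodType k;
  tmul : U -> V -> tcar;
  tmul_bilinear : bilinear_map tmul;
  tensor_univ : forall (W : lmodType k) (b : U -> V -> W), bilinear_map b ->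
    exists l : {linear tcar -> W},
      (forall u v, l (tmul u v) = b u v) /\
      (forall l' : {linear tcar -> W}, (forall u v, l' (tmul u v) = b u v) ->
         forall t, l' t = l t)
}.

Lemma tmap_bilinear (U V U' V' : lmodType k) (T' : tensor U' V')
  (f : {linear U -> U'}) (g : {linear V -> V'}) :
  bilinear_map (fun u v => tmul T' (f u) (g v)).
Proof.
have [H1 H2] := tmul_bilinear T'.
split=> a u u' v; rewrite linearP; [exact: H1 | exact: H2].
Qed.

Definition tmap (U V U' V' : lmodType k) (T : tensor U V) (T' : tensor U' V')
  (f : {linear U -> U'}) (g : {linear V -> V'}) : {linear T -> T'} :=
  proj1_sig (constructive_indefinite_description _
    (tensor_univ T (tmap_bilinear T' f g))).

Definition idlin (U : lmodType k) : {linear U -> U} := (@idfun U : {linear U -> U}).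

(* Coalgebra: comultiplication and counit, with coassociativity
   (modulo the associator (H(x)H)(x)H ~ H(x)(H(x)H)) and counitality
   (modulo k(x)H ~ H ~ H(x)k). *)
Record coalgebra (H : lmodType k) := Coalgebra {
  cHH : tensor H H;
  cHH_H : tensor cHH H;
  cH_HH : tensor H cHH;
  ckH : tensor k^o H;
  cHk : tensor H k^o;
  comul : {linear H -> cHH};
  counit : {linear H -> k^o};
  coassoc : exists asc : {linear cHH_H -> cH_HH},
    (forall x y z, asc (tmul cHH_H (tmul cHH x y) z) = tmul cH_HH x (tmul cHH y z)) /\
    (forall h, asc (tmap cHH cHH_H comul (idlin H) (comul h))
               = tmap cHH cH_HH (idlin H) comul (comul h));
  counit_l : exists lam : {linear ckH -> H},
    (forall (a : k^o) h, lam (tmul ckH a h) = a *: h) /\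
    (forall h, lam (tmap cHH ckH counit (idlin H) (comul h)) = h);
  counit_r : exists lam : {linear cHk -> H},
    (forall h (a : k^o), lam (tmul cHk h a) = a *: h) /\
    (forall h, lam (tmap cHH cHk (idlin H) counit (comul h)) = h)
}.

Record comodule (H : lmodType k) (C : coalgebra H) := Comodule {
  cX :> lmodType k;
  cXH : tensor cX H;
  cXH_H : tensor cXH H;
  cX_HH : tensor cX (cHH C);
  cXk : tensor cX k^o;
  corho : {linear cX -> cXH};
  comod_coassoc : exists asc : {linear cXH_H -> cX_HH},
    (forall x y z, asc (tmul cXH_H (tmul cXH x y) z) = tmul cX_HH x (tmul (cHH C) y z)) /\
    (forall x, asc (tmap cXH cXH_H corho (idlin H) (corho x))
               = tmap cXH cX_HH (idlin cX) (comul C) (corho x));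
  comod_counit : exists lam : {linear cXk -> cX},
    (forall x (a : k^o), lam (tmul cXk x a) = a *: x) /\
    (forall x, lam (tmap cXH cXk (idlin cX) (counit C) (corho x)) = x)
}.

Record pcdatum (H : lmodType k) := PCDatum {
  pY : lmodType k;
  pYH : tensor pY H;
  pYbH : lmodType k;
  ppi : {linear pYH -> pYbH};
  ppi_surj : forall z : pYbH, exists t : pYH, ppi t = z;
  prho : {linear pY -> pYbH}
}.

Definition pc_morphism (H : lmodType k) (Y X : pcdatum H)
  (f : {linear pY Y -> pY X}) (fb : {linear pYbH Y -> pYbH X}) :=
  (forall y, fb (prho Y y) = prho X (f y)) /\
  (forall t, fb (ppi Y t) = ppi X (tmap (pYH Y) (pYH X) f (idlin H) t)).

Definition partial_subcomodule (H : lmodType k) (Y X : pcdatum H)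
  (f : {linear pY Y -> pY X}) (fb : {linear pYbH Y -> pYbH X}) :=
  [/\ pc_morphism f fb, injective f & injective fb].

Definition pc_global (H : lmodType k) (Y : pcdatum H) := bijective (ppi Y).

Lemma idlin_surj (U : lmodType k) (z : U) : exists t : U, idlin U t = z.
Proof. by exists z. Qed.

Definition comod_datum (H : lmodType k) (C : coalgebra H) (X : comodule C) :
  pcdatum H :=
  @PCDatum H (cX X) (cXH X) (cXH X) (idlin _) (@idlin_surj _) (corho X).

End Tensor.

(* Main.v *)
Require Import Defs.
From mathcomp Require Import all_boot all_order all_algebra.
From mathcomp Require Import boolp classical_sets.
From Stdlib Require Import ClassicalEpsilon.
Set Implicit Arguments. Unset Strict Implicit. Unset Printing Implicit Defensive.
Import GRing.Theory.
Local Open Scope ring_scope.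

Section Compl.
Variables (k : fieldType) (Y X : lmodType k) (f : {linear Y -> X}).
Hypothesis finj : injective f.

Definition goodK (K : X -> Prop) :=
  [/\ K 0, (forall (a : k) u v, K u -> K v -> K (a *: u + v)) &
      (forall y, K (f y) -> y = 0)].

Record gK := GK { gKs : X -> Prop; gKp : goodK gKs }.
Definition Rk : rel gK := fun A B => `[< forall x, gKs A x -> gKs B x >].

Lemma exists_max : exists M : gK, forall N, Rk M N -> N = M.
Proof.
apply: Zorn.
- by move=> t; apply/asboolP.
- by move=> r s t /asboolP H1 /asboolP H2; apply/asboolP => x /H1/H2.
- move=> [s ps] [t pt] /asboolP /= H1 /asboolP /= H2.
  have E : s = t by apply: funext => x; apply: propext; split; [apply: H1|apply: H2].
  subst t; congr GK; exact: Prop_irrelevance.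
- move=> A Atot.
  pose U x := x = 0 \/ exists2 K, A K & gKs K x.
  have gU : goodK U.
    split.
    + by left.
    + move=> a u v [->|[K1 AK1 Ku]] [->|[K2 AK2 Kv]].
      * by left; rewrite scaler0 addr0.
      * by right; exists K2 => //; rewrite scaler0 add0r.
      * right; exists K1 => //; case: (gKp K1) => K0 Kc _.
        by apply: Kc.
      * right; case: (Atot K1 K2 AK1 AK2) => /asboolP HR.
        - exists K2 => //; case: (gKp K2) => K0 Kc _; apply: Kc => //; exact: HR.
        - exists K1 => //; case: (gKp K1) => K0 Kc _; apply: Kc => //; exact: HR.
    + move=> y [Hy|[K AK Ky]].
      * by apply: finj; rewrite Hy linear0.
      * by case: (gKp K) => _ _; apply.
  exists (GK gU) => s As; apply/asboolP => x Hx /=; right; by exists s.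
Qed.

Lemma exists_retract : exists g : X -> Y,
  (forall (a : k) u v, g (a *: u + v) = a *: g u + g v) /\ (forall y, g (f y) = y).
Proof.
have [M Mmax] := exists_max.
case: M Mmax => K gK0 Mmax; case: (gK0) => K0 Kc Kt.
have KN u : K u -> K (- u).
  by move=> Ku; rewrite -[- u]addr0 -scaleN1r; apply: Kc.
have KD u v : K u -> K v -> K (u + v).
  by move=> Ku Kv; rewrite -[u]scale1r; apply: Kc.
have Kex x : exists y, K (x - f y).
  apply: NNPP => Hn.
  have Hx : forall y, ~ K (x - f y) by move=> y Hy; apply: Hn; exists y.
  pose K' z := exists u (a : k), K u /\ z = u + a *: x.
  have gK' : goodK K'.
    split.
    + by exists 0, 0; rewrite scale0r addr0.
    + move=> a _ _ [u1 [b1 [Ku1 ->]]] [u2 [b2 [Ku2 ->]]].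
      exists (a *: u1 + u2), (a * b1 + b2); split; first exact: Kc.
      rewrite scalerDr scalerDl scalerA; rewrite -!addrA; congr (_ + _).
      by rewrite addrCA.
    + move=> y [u [a [Ku Hy]]].
      have [a0|an0] := eqVneq a 0.
        by apply: Kt; rewrite Hy a0 scale0r addr0.
      exfalso; apply: (Hx (a^-1 *: y)).
      have -> : x - f (a^-1 *: y) = - (a^-1 *: u).
      rewrite linearZ_LR Hy scalerDr scalerA mulVf // scale1r.
        by rewrite opprD addrC addrNK.
      apply: KN; rewrite -[_ *: u]addr0; exact: Kc.
  have := Mmax (GK gK').
  have R : Rk (GK gK0) (GK gK').
    by apply/asboolP => z Kz /=; exists z, 0; rewrite scale0r addr0.
  move=> /(_ R) E.
  have : K' x by exists 0, 1; rewrite scale1r add0r.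
  move=> Hk; have : gKs (GK gK') x := Hk; rewrite E /= => Kx.
  by apply: (Hx 0); rewrite linear0 subr0.
pose g x := proj1_sig (constructive_indefinite_description _ (Kex x)).
have gP x : K (x - f (g x)) by rewrite /g; case: constructive_indefinite_description.
have guniq x y : K (x - f y) -> g x = y.
  move=> Hy; apply/eqP; rewrite -subr_eq0; apply/eqP; apply: Kt.
  have -> : f (g x - y) = (x - f y) - (x - f (g x)).
    by rewrite linearB opprB [RHS]addrC addrA subrK.
  by apply: KD => //; apply: KN.
exists g; split.
- move=> a u v; apply: guniq.
  have -> : a *: u + v - f (a *: g u + g v) = a *: (u - f (g u)) + (v - f (g v)).
    rewrite linearP scalerBr opprD addrACA.
    done.
  exact: Kc.
- by move=> y; apply: guniq; rewrite subrr.
Qed.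

End Compl.

Lemma tmapE (k : fieldType) (U V U' V' : lmodType k) (T : tensor U V) (T' : tensor U' V')
  (f : {linear U -> U'}) (g : {linear V -> V'}) u v :
  tmap T T' f g (tmul T u v) = tmul T' (f u) (g v).
Proof.
rewrite /tmap; case: constructive_indefinite_description => l [H1 _] /=.
exact: H1.
Qed.

Lemma tensor_ext (k : fieldType) (U V : lmodType k) (T : tensor U V)
  (l1 l2 : {linear T -> T}) :
  (forall u v, l1 (tmul T u v) = tmul T u v) ->
  (forall u v, l2 (tmul T u v) = tmul T u v) -> forall t, l1 t = l2 t.
Proof.
move=> H1 H2 t.
have [l0 [_ U0]] := tensor_univ T (tmul_bilinear T).
by rewrite (U0 l1 H1) (U0 l2 H2).
Qed.

Theorem mainTheorem8 (k : fieldType) (H : lmodType k) (C : coalgebra H)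
  (X : comodule C) (Y : pcdatum H)
  (f : {linear pY Y -> pY (comod_datum X)})
  (fb : {linear pYbH Y -> pYbH (comod_datum X)}) :
  partial_subcomodule f fb -> pc_global Y.
Proof.
move=> [[Hrho Hpi] finj fbinj].
have [g [gl gf]] := exists_retract finj.
pose T := pYH Y.
have bil : bilinear_map (fun (x : cX X) (h : H) => tmul T (g x) h).
  have [B1 B2] := tmul_bilinear T.
  by split=> a u u' v; rewrite ?gl; [apply: B1 | apply: B2].
have [l [lE _]] := tensor_univ (cXH X) bil.
pose tf := tmap (pYH Y) (pYH (comod_datum X)) f (idlin H).
have comp t : l (tf t) = t.
  have := @tensor_ext k _ _ T (l \o tf)%FUN (idlin T).
  apply=> // u v /=; by rewrite /tf tmapE lE gf.
have pinj : injective (ppi Y).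
  move=> t1 t2 E.
  have := congr1 fb E; rewrite !Hpi /= => E2.
  by rewrite -(comp t1) -(comp t2) /tf E2.
have inv z : {t | ppi Y t = z} by apply: constructive_indefinite_description; exact: ppi_surj.
exists (fun z => proj1_sig (inv z)).
- by move=> t; apply: pinj; case: (inv _).
- by move=> z; case: (inv z).
Qed.
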